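(* Consider the system on an Erdős random graph process on $N\ge2$ nodes with noise level $\eta>0$. (i) If $0<\eta\le1$, then for every initial condition, with probability one the state eventually reaches and remains at either the all-$(+1)$ state or the all-$(-1)$ state (agreement). (ii) If $\eta>1$, then $\mathbf{E}\,S(k)=\eta^{-k}\,\mathbf{E}\,S(0)$ for all $k\ge0$; in particular $\mathbf{E}\,S(k)$ converges to zero exponentially with decay exponent $\ln\eta$.
   Context: Erdős random graph process: at each time $k$, the graph $G(k)$ on nodes $V=\{1,\dots,N\}$ is a simple undirected graph in which each of the $N(N-1)/2$ possible edges is present independently with probability $1/2$ (so each of the $2^{N(N-1)/2}$ graphs has equal probability); the graphs at different times are independent, and independent of the noises and of $x(0)$. Each node carries a value $x_i(k)\in\{+1,-1\}$. The neighborhood $N_i(k)$ consists of $i$ and all nodes adjacent to $i$ in $G(k)$; $v_i(k)=\frac{1}{|N_i(k)|}\sum_{j\in N_i(k)}x_j(k)$. The update is $x_i(k+1)=\operatorname{sign}[v_i(k)+\xi_i(k)]$, where $\xi_i(k)$ are i.i.d. uniform on $[-\eta,\eta]$ across $i$ and $k$, independent of $x(0)$ and of the graph process. The state sum is $S(k)=\sum_{i=1}^N x_i(k)$. *)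

(* Defs.v *)
From Stdlib Require Import Reals.
From mathcomp Require Import all_boot.
Set Implicit Arguments. Unset Strict Implicit. Unset Printing Implicit Defensive.
Open Scope R_scope.

(* A state: x_i = +1 is encoded by true, x_i = -1 by false. *)
Definition state (N : nat) := {ffun 'I_N -> bool}.
Definition spin (b : bool) : R := if b then 1 else -1.

Definition state_sum (N : nat) (x : state N) : R :=
  \big[Rplus/0]_(i : 'I_N) spin (x i).

Definition consensus (N : nat) (x : state N) : bool :=
  (x == [ffun=> true]) || (x == [ffun=> false]).

Definition graph (N : nat) := {set 'I_N * 'I_N}.
Definition simple_graph (N : nat) (G : graph N) : bool :=
  G \subset [set p : 'I_N * 'I_N | (p.1 < p.2)%N].
Definition adj (N : nat) (G : graph N) (i j : 'I_N) : bool :=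
  ((i, j) \in G) || ((j, i) \in G).
Definition nbhd (N : nat) (G : graph N) (i : 'I_N) : {set 'I_N} :=
  [set j | (j == i) || adj G i j].
Definition local_avg (N : nat) (G : graph N) (x : state N) (i : 'I_N) : R :=
  (\big[Rplus/0]_(j in nbhd G i) spin (x j)) / INR #|nbhd G i|.

(* Erdos random graph: uniform over the 2^(N(N-1)/2) simple graphs. *)
Definition graph_prob (N : nat) (G : graph N) : R :=
  if simple_graph G then / 2 ^ 'C(N, 2) else 0.

(* For xi uniform on [-eta, eta]:  P(v + xi > 0) = clip_[0,1]((v + eta)/(2 eta)). *)
Definition clip01 (r : R) : R := Rmax 0 (Rmin 1 r).
Definition prob_plus (eta v : R) : R := clip01 ((v + eta) / (2 * eta)).
Definition node_prob (eta v : R) (b : bool) : R :=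
  if b then prob_plus eta v else 1 - prob_plus eta v.

(* One-step transition probability P(x(k+1) = y | x(k) = x): average over the
   random graph, nodes updating independently given the graph. *)
Definition trans (N : nat) (eta : R) (x y : state N) : R :=
  \big[Rplus/0]_(G : graph N)
     (graph_prob G * \big[Rmult/1]_(i : 'I_N) node_prob eta (local_avg G x i) (y i)).

Definition is_distr (N : nat) (mu : state N -> R) : Prop :=
  (forall x, 0 <= mu x) /\ \big[Rplus/0]_(x : state N) mu x = 1.

Definition traj (N M : nat) := {ffun 'I_M.+1 -> state N}.
Definition traj_weight (N : nat) (eta : R) (mu : state N -> R) (M : nat)
    (p : traj N M) : R :=
  mu (p ord0) *
  \big[Rmult/1]_(j < M) trans eta (p (inord j)) (p (inord j.+1)).

Definition path_expect (N : nat) (eta : R) (mu : state N -> R) (M : nat)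
    (f : traj N M -> R) : R :=
  \big[Rplus/0]_(p : traj N M) (traj_weight eta mu p * f p).

Definition path_prob (N : nat) (eta : R) (mu : state N -> R) (M : nat)
    (E : traj N M -> bool) : R :=
  \big[Rplus/0]_(p : traj N M | E p) traj_weight eta mu p.

Definition expected_sum (N : nat) (eta : R) (mu : state N -> R) (k : nat) : R :=
  path_expect eta mu (fun p : traj N k => state_sum (p ord_max)).

(* Main.v *)
From HB Require Import structures.
Require Import Defs.
From Stdlib Require Import Reals Lra.
From mathcomp Require Import all_boot.
Set Implicit Arguments. Unset Strict Implicit. Unset Printing Implicit Defensive.
Open Scope R_scope.

Lemma RplusA : associative Rplus. Proof. move=> x y z; lra. Qed.
Lemma RmultA : associative Rmult. Proof. move=> x y z; lra. Qed.
Lemma Rplus_left_id : left_id 0 Rplus. Proof. move=> x; lra. Qed.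
Lemma Rmult_left_id : left_id 1 Rmult. Proof. move=> x; lra. Qed.
HB.instance Definition _ := Monoid.isComLaw.Build R 0 Rplus RplusA Rplus_comm Rplus_left_id.
HB.instance Definition _ := Monoid.isComLaw.Build R 1 Rmult RmultA Rmult_comm Rmult_left_id.
Lemma Rm0l : left_zero 0 Rmult. Proof. move=> x; lra. Qed.
Lemma Rm0r : right_zero 0 Rmult. Proof. move=> x; lra. Qed.
HB.instance Definition _ := Monoid.isMulLaw.Build R 0 Rmult Rm0l Rm0r.
Lemma RDl : left_distributive Rmult Rplus. Proof. move=> x y z; lra. Qed.
Lemma RDr : right_distributive Rmult Rplus. Proof. move=> x y z; lra. Qed.
HB.instance Definition _ := Monoid.isAddLaw.Build R Rmult Rplus RDl RDr.


Lemma sum_const (T : finType) (A : {pred T}) (c : R) :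
  \big[Rplus/0]_(i in A) c = INR #|A| * c.
Proof.
rewrite big_const; elim: #|A| => [|n IH]; first (simpl; lra).
change (iter n.+1 (Rplus c) 0) with (c + iter n (Rplus c) 0); rewrite IH S_INR; lra.
Qed.

Lemma sum_le (I : Type) (r : seq I) (P : pred I) (F G : I -> R) :
  (forall i, P i -> F i <= G i) ->
  \big[Rplus/0]_(i <- r | P i) F i <= \big[Rplus/0]_(i <- r | P i) G i.
Proof.
move=> H; apply: (big_ind2 (fun a b => a <= b)) => //; first lra.
move=> *; lra.
Qed.

Lemma sum_ge0 (I : Type) (r : seq I) (P : pred I) (F : I -> R) :
  (forall i, P i -> 0 <= F i) -> 0 <= \big[Rplus/0]_(i <- r | P i) F i.
Proof.
move=> H; apply: (big_ind (fun a => 0 <= a)) => //; first lra.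
move=> *; lra.
Qed.

Lemma prod_ge0 (I : Type) (r : seq I) (P : pred I) (F : I -> R) :
  (forall i, P i -> 0 <= F i) -> 0 <= \big[Rmult/1]_(i <- r | P i) F i.
Proof.
move=> H; apply: (big_ind (fun a => 0 <= a)) => //; first lra.
move=> *; nra.
Qed.

Lemma term_le_sum (T : finType) (F : T -> R) (i0 : T) :
  (forall i, 0 <= F i) -> F i0 <= \big[Rplus/0]_(i : T) F i.
Proof.
move=> H; rewrite (bigD1 i0) //=.
have := @sum_ge0 _ (index_enum T) (fun i => i != i0) F (fun i _ => H i). lra.
Qed.

Lemma prod_ge_pow (n : nat) (F : 'I_n -> R) (a : R) :
  0 <= a -> (forall i, a <= F i) -> a ^ n <= \big[Rmult/1]_(i < n) F i.
Proof.
move=> a0; elim: n F => [|n IH] F H; first by rewrite big_ord0 /=; lra.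
rewrite big_ord_recr /= Rmult_comm.
have := IH (fun i => F (widen_ord (leqnSn n) i)) (fun i => H _).
have := H ord_max. move=> h1 h2.
apply: Rmult_le_compat => //; exact: pow_le.
Qed.

Section ProdMeas.
Variable N : nat.
Variable q : 'I_N -> bool -> R.
Hypothesis Hq : forall i, q i true + q i false = 1.

Lemma prodmeas1 :
  \big[Rplus/0]_(y : state N) \big[Rmult/1]_(i : 'I_N) q i (y i) = 1.
Proof.
rewrite /state -(bigA_distr_bigA (fun i b => q i b)).
rewrite big1 // => i _; rewrite big_bool /=; exact: Hq.
Qed.

Lemma prodmeas_spin (k : 'I_N) :
  \big[Rplus/0]_(y : state N) (\big[Rmult/1]_(i : 'I_N) q i (y i) * spin (y k))
  = q k true - q k false.
Proof.
pose g i b := if i == k then q i b * spin b else q i b.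
transitivity (\big[Rplus/0]_(y : state N) \big[Rmult/1]_(i : 'I_N) g i (y i)).
  apply: eq_bigr => y _.
  rewrite (bigD1 k) //= [in RHS](bigD1 k) //= /g eqxx.
  rewrite [X in _ = _ * X](eq_bigr (fun i => q i (y i))); last by move=> i /negbTE ->.
  rewrite !Rmult_assoc; congr (_ * _); exact: Rmult_comm.
rewrite /state -(bigA_distr_bigA g).
rewrite (bigD1 k) //= [X in _ * X]big1; last by move=> i /negbTE ik; rewrite big_bool /g ik; exact: Hq.
rewrite big_bool /g eqxx /spin /=; lra.
Qed.
End ProdMeas.

Definition pairsN (N : nat) := [set p : 'I_N * 'I_N | (p.1 < p.2)%N].
Definition Sgraphs (N : nat) := [set G : graph N | simple_graph G].

Lemma card_pairsN N : #|pairsN N| = 'C(N, 2).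
Proof.
rewrite -sum1_card.
transitivity (\sum_(i : 'I_N) \sum_(j : 'I_N | (i < j)%N) 1)%N.
  rewrite pair_big_dep /=; apply: eq_bigl => p; by rewrite inE.
rewrite (exchange_big_dep xpredT) //=.
transitivity (\sum_(j : 'I_N) j)%N.
  apply: eq_bigr => j _.
  rewrite -[RHS]card_ord -sum1_card.
  by rewrite (@big_ord_widen_cond _ _ _ j N xpredT (fun _ => 1%N) (ltnW (ltn_ord j))).
by rewrite -(big_mkord xpredT (fun j => j)) bin2_sum.
Qed.

Lemma Sgraphs_pow N : Sgraphs N = powerset (pairsN N).
Proof. by apply/setP => G; rewrite !inE. Qed.

Lemma card_Sgraphs N : #|Sgraphs N| = (2 ^ 'C(N, 2))%N.
Proof. by rewrite Sgraphs_pow card_powerset card_pairsN. Qed.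

Lemma Eg_def N (F : graph N -> R) :
  \big[Rplus/0]_(G : graph N) (graph_prob G * F G)
  = / 2 ^ 'C(N, 2) * \big[Rplus/0]_(G in Sgraphs N) F G.
Proof.
rewrite big_distrr /= [RHS]big_mkcond /=; apply: eq_bigr => G _.
rewrite /graph_prob inE; case: (simple_graph G) => /=; lra.
Qed.

Lemma pow2_pos n : 0 < 2 ^ n.
Proof. apply: pow_lt; lra. Qed.

Lemma INR_expn2 n : INR (2 ^ n)%N = 2 ^ n.
Proof.
elim: n => [|n IH]; first by rewrite expn0 /=.
by rewrite expnS -multE mult_INR IH.
Qed.

Lemma gp_sum1 N : \big[Rplus/0]_(G : graph N) graph_prob G = 1.
Proof.
transitivity (\big[Rplus/0]_(G : graph N) (graph_prob G * 1)).
  by apply: eq_bigr => G _; rewrite Rmult_1_r.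
rewrite Eg_def sum_const card_Sgraphs INR_expn2.
have h := pow2_pos 'C(N, 2).
field; lra.
Qed.

Lemma gp_ge0 N (G : graph N) : 0 <= graph_prob G.
Proof.
rewrite /graph_prob; case: ifP => _; last lra.
apply: Rlt_le; apply: Rinv_0_lt_compat; exact: pow2_pos.
Qed.

Lemma clip01_bnd r : 0 <= clip01 r <= 1.
Proof.
rewrite /clip01; split; first exact: Rmax_l.
apply: Rmax_lub; first lra. exact: Rmin_l.
Qed.

Lemma np_ge0 eta v b : 0 <= node_prob eta v b.
Proof. rewrite /node_prob /prob_plus; have := clip01_bnd ((v + eta) / (2 * eta)); case: b; lra. Qed.

Lemma np_sum eta v : node_prob eta v true + node_prob eta v false = 1.
Proof. rewrite /node_prob; lra. Qed.

Definition PG N eta (G : graph N) (x y : state N) : R :=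
  \big[Rmult/1]_(i : 'I_N) node_prob eta (local_avg G x i) (y i).

Lemma PG_ge0 N eta (G : graph N) x y : 0 <= PG eta G x y.
Proof. apply: prod_ge0 => i _; exact: np_ge0. Qed.

Lemma trans_ge0 N eta (x y : state N) : 0 <= trans eta x y.
Proof.
apply: sum_ge0 => G _; apply: Rmult_le_pos; first exact: gp_ge0.
exact: PG_ge0.
Qed.

Lemma trans_sum1 N eta (x : state N) : \big[Rplus/0]_(y : state N) trans eta x y = 1.
Proof.
rewrite /trans exchange_big /=.
rewrite -[RHS](gp_sum1 N); apply: eq_bigr => G _.
rewrite -big_distrr /=.
rewrite (@prodmeas1 N (fun i b => node_prob eta (local_avg G x i) b)); first lra.
move=> i; exact: np_sum.
Qed.

Lemma nbhd_in N (G : graph N) i : i \in nbhd G i.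
Proof. by rewrite inE eqxx. Qed.

Lemma card_nbhd_pos N (G : graph N) i : 0 < INR #|nbhd G i|.
Proof.
apply: lt_0_INR; apply/ltP; apply/card_gt0P; exists i; exact: nbhd_in.
Qed.

Lemma local_avg_bnd N (G : graph N) x i : -1 <= local_avg G x i <= 1.
Proof.
rewrite /local_avg; have hp := card_nbhd_pos G i.
set n := INR _ in hp *.
have h1 : \big[Rplus/0]_(j in nbhd G i) spin (x j) <= \big[Rplus/0]_(j in nbhd G i) 1.
  apply: sum_le => j _; rewrite /spin; case: (x j); lra.
have h2 : \big[Rplus/0]_(j in nbhd G i) (-1) <= \big[Rplus/0]_(j in nbhd G i) spin (x j).
  apply: sum_le => j _; rewrite /spin; case: (x j); lra.
rewrite !sum_const -/n in h1 h2.
split.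
- apply: (Rmult_le_reg_r n) => //; rewrite /Rdiv Rmult_assoc Rinv_l; lra.
- apply: (Rmult_le_reg_r n) => //; rewrite /Rdiv Rmult_assoc Rinv_l; lra.
Qed.

Lemma local_avg_const N (G : graph N) (x : state N) i b :
  (forall j, x j = b) -> local_avg G x i = spin b.
Proof.
move=> hx; rewrite /local_avg (eq_bigr (fun _ => spin b)); last by move=> j _; rewrite hx.
rewrite sum_const; have := card_nbhd_pos G i; move=> h; field; lra.
Qed.

Lemma prob_plus_lin eta v : 1 <= eta -> -1 <= v <= 1 ->
  prob_plus eta v = (v + eta) / (2 * eta).
Proof.
move=> he hv; rewrite /prob_plus /clip01.
have h0 : 0 <= (v + eta) / (2 * eta).
  apply: Rmult_le_pos; first lra. apply: Rlt_le; apply: Rinv_0_lt_compat; lra.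
have h1 : (v + eta) / (2 * eta) <= 1.
  apply: (Rmult_le_reg_r (2 * eta)); first lra.
  rewrite /Rdiv Rmult_assoc Rinv_l; lra.
rewrite Rmin_right // Rmax_right //.
Qed.

Section Sym.
Variable N : nat.
Implicit Types (G : graph N) (i j k : 'I_N).

Lemma adj_sym G i j : adj G i j = adj G j i.
Proof. by rewrite /adj orbC. Qed.

Lemma nbhd_sym G i j : (j \in nbhd G i) = (i \in nbhd G j).
Proof. by rewrite !inE adj_sym eq_sym. Qed.

Definition swap (a b k : 'I_N) : 'I_N := if k == a then b else if k == b then a else k.

Lemma swapK a b : involutive (swap a b).
Proof.
move=> k; rewrite /swap.
case: (eqVneq k a) => [->|hka]; first by rewrite eqxx; case: (eqVneq b a) => [->|]; rewrite ?eqxx.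
case: (eqVneq k b) => [->|hkb]; first by rewrite eqxx.
by rewrite (negbTE hka) (negbTE hkb).
Qed.

Lemma swap_inj a b : injective (swap a b).
Proof. exact: inv_inj (@swapK a b). Qed.

Definition phi (a b : 'I_N) G : graph N :=
  [set p : 'I_N * 'I_N | (p.1 < p.2)%N && adj G (swap a b p.1) (swap a b p.2)].

Lemma adj_phi a b G u w : adj (phi a b G) u w = (u != w) && adj G (swap a b u) (swap a b w).
Proof.
rewrite {1}/adj !inE /=.
case: (ltngtP u w) => h.
- have -> : (u != w) by apply/eqP => e; rewrite e ltnn in h.
  by rewrite orbF.
- have -> : (u != w) by apply/eqP => e; rewrite e ltnn in h.
  by rewrite adj_sym.
  have e : u = w by apply: val_inj. by rewrite e eqxx.
Qed.

Lemma simple_adj_diag G k : simple_graph G -> adj G k k = false.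
Proof.
move=> /subsetP hs; rewrite /adj orbb; apply/negP => /hs; by rewrite inE ltnn.
Qed.

Lemma phi_simple a b G : phi a b G \in Sgraphs N.
Proof. by rewrite inE; apply/subsetP => p; rewrite !inE => /andP []. Qed.

Lemma phiK a b G : G \in Sgraphs N -> phi a b (phi a b G) = G.
Proof.
rewrite inE => /subsetP hs; apply/setP => [[u w]]; rewrite inE /= adj_phi !swapK.
rewrite (inj_eq (@swap_inj a b)).
case: (ltngtP u w) => h /=.
- have -> : (u != w) by apply/eqP => e; rewrite e ltnn in h.
  rewrite /= /adj; case: ((w, u) \in G) / idP => [/hs|]; first by rewrite inE /= ltnNge (ltnW h).
  by rewrite orbF.
- apply/esym/negP => /hs; rewrite inE /= ltnNge (ltnW h) //.
- have e : u = w by apply: val_inj.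
  rewrite e; apply/esym/negP => /hs; rewrite inE /= ltnn //.
Qed.

Lemma nbhd_phi a b G i : nbhd (phi a b G) i = swap a b @^-1: nbhd G (swap a b i).
Proof.
apply/setP => k; rewrite !inE adj_phi (inj_eq (@swap_inj a b)).
by case: (eqVneq k i) => [->|h] //=; rewrite eq_sym h.
Qed.

Definition cj G j : R := \big[Rplus/0]_(i in nbhd G j) / INR #|nbhd G i|.

Lemma cj_phi a b G j : cj (phi a b G) j = cj G (swap a b j).
Proof.
rewrite /cj nbhd_phi.
rewrite [RHS](reindex_inj (@swap_inj a b)) /=.
apply: eq_big => i; first by rewrite inE.
move=> _; by rewrite nbhd_phi card_preimset //; apply: swap_inj.
Qed.

Lemma sum_Sgraphs_phi a b (F : graph N -> R) :
  \big[Rplus/0]_(G in Sgraphs N) F G = \big[Rplus/0]_(G in Sgraphs N) F (phi a b G).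
Proof.
have e : phi a b @: Sgraphs N = Sgraphs N.
  apply/setP => G; apply/imsetP/idP => [[G' _ ->]|hG]; first exact: phi_simple.
  by exists (phi a b G); [exact: phi_simple | rewrite phiK].
rewrite -{1}e big_imset //.
by move=> G1 G2 h1 h2 h; rewrite -(@phiK a b _ h1) -(@phiK a b _ h2) h.
Qed.

Lemma Ecj_sym j k :
  \big[Rplus/0]_(G in Sgraphs N) cj G j = \big[Rplus/0]_(G in Sgraphs N) cj G k.
Proof.
rewrite (sum_Sgraphs_phi j k); apply: eq_bigr => G _.
by rewrite cj_phi /swap eqxx.
Qed.

End Sym.

Section Avg.
Variable N : nat.
Implicit Types (G : graph N) (x : state N).

Lemma sum_avg_cj G x :
  \big[Rplus/0]_(i : 'I_N) local_avg G x i
  = \big[Rplus/0]_(j : 'I_N) (spin (x j) * cj G j).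
Proof.
rewrite /local_avg.
under eq_bigr => i _ do rewrite /Rdiv big_distrl /= big_mkcond /=.
rewrite exchange_big /=; apply: eq_bigr => j _.
rewrite /cj big_distrr /= [RHS]big_mkcond /=; apply: eq_bigr => i _.
rewrite nbhd_sym; case: (i \in nbhd G j) => /=; lra.
Qed.

Lemma sum_cj G : \big[Rplus/0]_(j : 'I_N) cj G j = INR N.
Proof.
rewrite /cj.
under eq_bigr => j _ do rewrite big_mkcond /=.
rewrite exchange_big /=.
transitivity (\big[Rplus/0]_(i : 'I_N) 1).
  apply: eq_bigr => i _.
  rewrite -big_mkcondr /=.
  rewrite (eq_bigl (fun j => j \in nbhd G i)); last by move=> j; rewrite nbhd_sym.
  rewrite sum_const; apply: Rinv_r; have := card_nbhd_pos G i; lra.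
rewrite big_const_ord; elim: N => [|n IH]; first done.
change (iter n.+1 (Rplus 1) 0) with (1 + iter n (Rplus 1) 0); rewrite IH S_INR; lra.
Qed.
End Avg.

Lemma sum_const_ord n (c : R) : \big[Rplus/0]_(i < n) c = INR n * c.
Proof.
rewrite big_const_ord; elim: n => [|n IH]; first (simpl; lra).
change (iter n.+1 (Rplus c) 0) with (c + iter n (Rplus c) 0); rewrite IH S_INR; lra.
Qed.

Lemma Ecj_val N (j : 'I_N) :
  \big[Rplus/0]_(G in Sgraphs N) cj G j = 2 ^ 'C(N, 2).
Proof.
have hN : 0 < INR N by apply: lt_0_INR; apply/ltP; exact: (leq_ltn_trans (leq0n j) (ltn_ord j)).
set T := \big[Rplus/0]_(G in Sgraphs N) cj G j.
have h1 : \big[Rplus/0]_(k < N) \big[Rplus/0]_(G in Sgraphs N) cj G k = INR N * T.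
  rewrite -sum_const_ord; apply: eq_bigr => k _; exact: Ecj_sym.
rewrite exchange_big /= in h1.
rewrite (eq_bigr (fun _ => INR N)) in h1; last by move=> G _; exact: sum_cj.
rewrite sum_const card_Sgraphs INR_expn2 in h1.
apply: (Rmult_eq_reg_l (INR N)); last lra.
rewrite -h1; ring.
Qed.

Lemma Eg_sum_avg N (x : state N) :
  \big[Rplus/0]_(G : graph N) (graph_prob G * \big[Rplus/0]_(i : 'I_N) local_avg G x i)
  = state_sum x.
Proof.
rewrite Eg_def.
under eq_bigr => G _ do rewrite sum_avg_cj.
rewrite exchange_big /= big_distrr /=; rewrite /state_sum; apply: eq_bigr => j _.
rewrite -big_distrr /= Ecj_val.
have := pow2_pos 'C(N, 2); move=> h; field; lra.
Qed.

Lemma PG_spin N eta (G : graph N) x : 1 <= eta ->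
  \big[Rplus/0]_(y : state N) (PG eta G x y * state_sum y)
  = \big[Rplus/0]_(k : 'I_N) (local_avg G x k / eta).
Proof.
move=> he.
rewrite (eq_bigr (fun y => \big[Rplus/0]_(k : 'I_N) (PG eta G x y * spin (y k)))); last by move=> y _; rewrite /state_sum big_distrr.
rewrite exchange_big /=; apply: eq_bigr => k _.
rewrite (@prodmeas_spin N (fun i b => node_prob eta (local_avg G x i) b)); last first.
  move=> i; exact: np_sum.
rewrite /node_prob prob_plus_lin //; last exact: local_avg_bnd.
field; lra.
Qed.

Lemma trans_S N eta (x : state N) : 1 <= eta ->
  \big[Rplus/0]_(y : state N) (trans eta x y * state_sum y) = state_sum x / eta.
Proof.
move=> he.
transitivity (\big[Rplus/0]_(G : graph N) (graph_prob G *
   \big[Rplus/0]_(y : state N) (PG eta G x y * state_sum y))).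
  rewrite (eq_bigr (fun y => \big[Rplus/0]_(G : graph N) (graph_prob G * (PG eta G x y * state_sum y)))); last first.
    move=> y _; rewrite /trans big_distrl /=; apply: eq_bigr => G _; rewrite /PG Rmult_assoc //.
  rewrite exchange_big /=; apply: eq_bigr => G _; by rewrite big_distrr.
transitivity (\big[Rplus/0]_(G : graph N) (graph_prob G *
   \big[Rplus/0]_(k : 'I_N) local_avg G x k) * / eta).
  rewrite big_distrl /=; apply: eq_bigr => G _.
  rewrite PG_spin // /Rdiv -big_distrl /= Rmult_assoc //.
by rewrite Eg_sum_avg.
Qed.

Lemma consensusP N (c : state N) : consensus c ->
  exists b, forall j, c j = b.
Proof.
rewrite /consensus => /orP [] /eqP ->; [exists true | exists false]; by move=> j; rewrite ffunE.
Qed.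

Lemma trans_cons N eta (c : state N) : 0 < eta -> eta <= 1 -> consensus c ->
  trans eta c c = 1.
Proof.
move=> he0 he1 /consensusP [b hb].
rewrite /trans -[RHS](gp_sum1 N); apply: eq_bigr => G _.
rewrite big1 ?Rmult_1_r // => i _.
rewrite (local_avg_const G i hb) hb /node_prob /prob_plus /clip01.
case: b {hb}; rewrite /spin.
- have h : 1 <= (1 + eta) / (2 * eta).
    apply: (Rmult_le_reg_r (2 * eta)); first lra.
    rewrite /Rdiv Rmult_assoc Rinv_l; lra.
  rewrite Rmin_left // Rmax_right //; lra.
- have h : (-1 + eta) / (2 * eta) <= 0.
    apply: (Rmult_le_reg_r (2 * eta)); first lra.
    rewrite /Rdiv Rmult_assoc Rinv_l; lra.
  rewrite Rmin_right; last lra.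
  rewrite Rmax_left //; lra.
Qed.

Lemma nbhd_complete N (i : 'I_N) : nbhd (pairsN N) i = setT.
Proof.
apply/setP => j; rewrite !inE /adj !inE /=.
case: (ltngtP i j) => h; rewrite ?orbT //.
have e : j = i by apply: val_inj; rewrite /= h. by rewrite e eqxx.
Qed.

Lemma inv_pow2_le1 n : / 2 ^ n <= 1.
Proof.
rewrite -Rinv_1; apply: Rinv_le_contravar; first lra.
apply: pow_R1_Rle; lra.
Qed.

Definition delta N : R := / 2 ^ 'C(N, 2) * (/ 2) ^ N.

Lemma delta_bnd N : 0 < delta N <= 1.
Proof.
rewrite /delta; have h1 := pow2_pos 'C(N, 2).
have h2 : 0 < (/2) ^ N by apply: pow_lt; lra.
have h3 : (/2) ^ N <= 1 by rewrite pow_inv; exact: inv_pow2_le1.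
have h4 := inv_pow2_le1 'C(N, 2).
split; first (apply: Rmult_lt_0_compat => //; exact: Rinv_0_lt_compat).
have h5 : 0 < / 2 ^ 'C(N, 2) by exact: Rinv_0_lt_compat.
nra.
Qed.

Lemma gp_complete N : graph_prob (pairsN N) = / 2 ^ 'C(N, 2).
Proof. by rewrite /graph_prob /simple_graph subxx. Qed.

Lemma trans_delta N eta (x : state N) :
  exists y, consensus y /\ delta N <= trans eta x y.
Proof.
set w := (\big[Rplus/0]_(j in [set: 'I_N]) spin (x j)) / INR #|[set: 'I_N]|.
have hw i : local_avg (pairsN N) x i = w by rewrite /local_avg nbhd_complete.
have key : forall b, (/2 <= node_prob eta w b) ->
    delta N <= trans eta x [ffun=> b].
  move=> b hb.
  apply: (Rle_trans _ _ _ _ (@term_le_sum _ (fun G => graph_prob G * PG eta G x [ffun=> b]) (pairsN N) _)); last first.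
    move=> G /=; apply: Rmult_le_pos; first exact: gp_ge0.
    apply: prod_ge0 => i _; exact: np_ge0.
  rewrite gp_complete /delta; apply: Rmult_le_compat_l.
    apply: Rlt_le; apply: Rinv_0_lt_compat; exact: pow2_pos.
  apply: prod_ge_pow; first lra.
  by move=> i; rewrite hw ffunE.
case: (Rle_dec (/2) (node_prob eta w true)) => h.
  exists [ffun=> true]; split; first by rewrite /consensus eqxx.
  exact: key.
exists [ffun=> false]; split; first by rewrite /consensus eqxx orbT.
apply: key; have := np_sum eta w; lra.
Qed.

Section Paths.
Variable N : nat.
Variable eta : R.
Variable mu : state N -> R.
Hypothesis mu_ge0 : forall x, 0 <= mu x.
Hypothesis mu_sum1 : \big[Rplus/0]_(x : state N) mu x = 1.

Definition ext M (q : traj N M) (y : state N) : traj N M.+1 :=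
  [ffun j : 'I_M.+2 => if (j < M.+1)%N then q (inord j) else y].
Definition trunc M (p : traj N M.+1) : traj N M := [ffun j : 'I_M.+1 => p (inord j)].

Lemma ext_inord M (q : traj N M) y (j : nat) : (j < M.+1)%N -> ext q y (inord j) = q (inord j).
Proof. by move=> h; rewrite ffunE inordK ?h // (ltn_trans h). Qed.

Lemma ext_max M (q : traj N M) y : ext q y ord_max = y.
Proof. by rewrite ffunE /= ltnn. Qed.

Lemma ext_bij M : bijective (fun u : traj N M * state N => ext u.1 u.2).
Proof.
exists (fun p => (trunc p, p ord_max)).
- move=> [q y] /=; congr (_, _); last exact: ext_max.
  by apply/ffunP => j; rewrite ffunE ext_inord ?ltn_ord // inord_val.
- move=> p /=; apply/ffunP => j; rewrite ffunE.
  case: ifP => h.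
    rewrite ffunE; congr (p _); apply: val_inj; rewrite /= !inordK //.
  congr (p _); apply: val_inj => /=.
  by have := ltn_ord j; rewrite ltnS leq_eqVlt h orbF => /eqP.
Qed.

Lemma sum_traj_S M (F : traj N M.+1 -> R) :
  \big[Rplus/0]_(p : traj N M.+1) F p
  = \big[Rplus/0]_(q : traj N M) \big[Rplus/0]_(y : state N) F (ext q y).
Proof.
rewrite pair_big /= (reindex _ (onW_bij _ (ext_bij M))) //.
Qed.

Lemma weight_ext M (q : traj N M) y :
  traj_weight eta mu (ext q y) = traj_weight eta mu q * trans eta (q ord_max) y.
Proof.
rewrite /traj_weight big_ord_recr /= Rmult_assoc.
congr (_ * _).
  congr (mu _); rewrite (_ : ord0 = inord 0); last by apply: val_inj; rewrite /= inordK.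
  rewrite ext_inord //; congr (q _); apply: val_inj; by rewrite /= inordK.
congr (_ * _).
  apply: eq_bigr => j _ /=.
  have h1 : (j < M.+1)%N by rewrite ltnS ltnW.
  have h2 : (j.+1 < M.+1)%N by rewrite ltnS.
  by rewrite !ext_inord.
rewrite ext_inord // (_ : inord M.+1 = ord_max); last by apply: val_inj; rewrite /= inordK.
rewrite ext_max; congr (trans _ (q _) _); apply: val_inj; by rewrite /= inordK.
Qed.

Lemma pe_S M (f : traj N M.+1 -> R) :
  path_expect eta mu f
  = path_expect eta mu (fun q : traj N M =>
       \big[Rplus/0]_(y : state N) (trans eta (q ord_max) y * f (ext q y))).
Proof.
rewrite /path_expect sum_traj_S; apply: eq_bigr => q _.
rewrite big_distrr /=; apply: eq_bigr => y _; rewrite weight_ext; ring.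
Qed.

End Paths.

Definition indb (b : bool) : R := if b then 1 else 0.

Section Main.
Variable N : nat.
Variable eta : R.
Variable mu : state N -> R.
Hypothesis mu_ge0 : forall x, 0 <= mu x.
Hypothesis mu_sum1 : \big[Rplus/0]_(x : state N) mu x = 1.

Lemma weight_ge0 M (p : traj N M) : 0 <= traj_weight eta mu p.
Proof.
apply: Rmult_le_pos => //; apply: prod_ge0 => j _; exact: trans_ge0.
Qed.

Lemma pe_le M (f g : traj N M -> R) : (forall p, f p <= g p) ->
  path_expect eta mu f <= path_expect eta mu g.
Proof.
move=> H; apply: sum_le => p _; apply: Rmult_le_compat_l; [exact: weight_ge0 | exact: H].
Qed.

Lemma pe_scale M (c : R) (f : traj N M -> R) :
  path_expect eta mu (fun p => c * f p) = c * path_expect eta mu f.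
Proof. rewrite /path_expect big_distrr /=; apply: eq_bigr => p _; ring. Qed.

Lemma pe_add M (f g : traj N M -> R) :
  path_expect eta mu (fun p => f p + g p) = path_expect eta mu f + path_expect eta mu g.
Proof. rewrite /path_expect -big_split /=; apply: eq_bigr => p _; ring. Qed.

Lemma pe_ext M (f g : traj N M -> R) : (forall p, f p = g p) ->
  path_expect eta mu f = path_expect eta mu g.
Proof. move=> H; apply: eq_bigr => p _; by rewrite H. Qed.

Lemma pe_one M : path_expect eta mu (fun _ : traj N M => 1) = 1.
Proof.
elim: M => [|M IH].
  rewrite /path_expect /traj_weight.
  have hb : bijective (fun x : state N => ([ffun=> x] : traj N 0)).
    exists (fun p : traj N 0 => p ord0) => [x|p]; first by rewrite ffunE.
    by apply/ffunP => j; rewrite ffunE (ord1 j).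
  rewrite (reindex _ (onW_bij _ hb)) /= -[RHS]mu_sum1; apply: eq_bigr => x _.
  by rewrite big_ord0 ffunE; ring.
rewrite pe_S -[RHS]IH; apply: pe_ext => q.
rewrite -[RHS](trans_sum1 eta (q ord_max)); apply: eq_bigr => y _; ring.
Qed.

Lemma pp_ind M (E : traj N M -> bool) :
  path_prob eta mu E = path_expect eta mu (fun p => indb (E p)).
Proof.
rewrite /path_prob /path_expect big_mkcond /=; apply: eq_bigr => p _.
rewrite /indb; case: (E p); ring.
Qed.

End Main.

Section Final.
Variable N : nat.
Variable eta : R.
Variable mu : state N -> R.
Hypothesis mu_ge0 : forall x, 0 <= mu x.
Hypothesis mu_sum1 : \big[Rplus/0]_(x : state N) mu x = 1.

Lemma es_S k : 1 < eta ->
  expected_sum eta mu k.+1 = / eta * expected_sum eta mu k.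
Proof.
move=> he; rewrite /expected_sum pe_S -pe_scale; apply: pe_ext => q.
rewrite (eq_bigr (fun y => trans eta (q ord_max) y * state_sum y)); last by move=> y _; rewrite ext_max.
rewrite trans_S; [rewrite /Rdiv; ring | lra].
Qed.

Lemma es_all k : 1 < eta ->
  expected_sum eta mu k = / eta ^ k * expected_sum eta mu 0.
Proof.
move=> he; elim: k => [|k IH]; first by rewrite /= Rinv_1 Rmult_1_l.
rewrite es_S // IH /=.
have h1 : eta <> 0 by lra.
have h2 := pow_nonzero eta k h1.
field; split => //.
Qed.

Hypothesis eta0 : 0 < eta.
Hypothesis eta1 : eta <= 1.

Lemma g_bound (x : state N) :
  \big[Rplus/0]_(y : state N) (trans eta x y * indb (~~ consensus y))
  <= (1 - delta N) * indb (~~ consensus x).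
Proof.
set h := \big[Rplus/0]_(y : state N) (trans eta x y * indb (consensus y)).
have hs : \big[Rplus/0]_(y : state N) (trans eta x y * indb (~~ consensus y)) = 1 - h.
  rewrite -(trans_sum1 eta x) /h.
  apply: (Rplus_eq_reg_r (\big[Rplus/0]_(y : state N) (trans eta x y * indb (consensus y)))).
  rewrite -big_split /=.
  have -> : forall a b : R, a - b + b = a by move=> a b; ring.
  apply: eq_bigr => y _; rewrite /indb; case: (consensus y) => /=; ring.
have hF : forall y, 0 <= trans eta x y * indb (consensus y).
  move=> y; apply: Rmult_le_pos; first exact: trans_ge0.
  rewrite /indb; case: (consensus y); lra.
have hd := delta_bnd N.
rewrite hs; case hx: (consensus x) => /=.
- have := @term_le_sum _ (fun y => trans eta x y * indb (consensus y)) x hF.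
  rewrite -/h /indb hx trans_cons //; rewrite /indb /=; lra.
- have [y0 [hy0 hdy]] := trans_delta eta x.
  have := @term_le_sum _ (fun y => trans eta x y * indb (consensus y)) y0 hF.
  rewrite -/h /indb hy0 /indb /=; lra.
Qed.

Lemma u_bound k :
  path_expect eta mu (fun p : traj N k => indb (~~ consensus (p ord_max)))
  <= (1 - delta N) ^ k.
Proof.
have hd := delta_bnd N.
elim: k => [|k IH].
  rewrite /= -(pe_one eta mu_sum1 0); apply: pe_le => // p.
  rewrite /indb; case: (~~ _); lra.
rewrite pe_S.
apply: Rle_trans (pe_le eta mu_ge0 (g := fun q : traj N k => (1 - delta N) * indb (~~ consensus (q ord_max))) _) _.
  move=> q /=.
  rewrite (eq_bigr (fun y => trans eta (q ord_max) y * indb (~~ consensus y))); last by move=> y _; rewrite ext_max.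
  exact: g_bound.
rewrite pe_scale /=; apply: Rmult_le_compat_l; [lra | exact: IH].
Qed.

Lemma cons_bound K :
  1 - (1 - delta N) ^ K <=
  path_expect eta mu (fun p : traj N K => indb (consensus (p ord_max))).
Proof.
have h := u_bound K.
have e : path_expect eta mu (fun p : traj N K => indb (consensus (p ord_max)))
   + path_expect eta mu (fun p : traj N K => indb (~~ consensus (p ord_max))) = 1.
  rewrite -pe_add -[RHS](pe_one eta mu_sum1 K); apply: pe_ext => p.
  rewrite /indb; case: (consensus _) => /=; ring.
lra.
Qed.

Definition Aev K M (p : traj N M) : bool :=
  [forall j : 'I_M.+1, (K <= j)%N ==> consensus (p j)].

Lemma A_base K :
  path_expect eta mu (fun p : traj N K => indb (consensus (p ord_max)))
  <= path_expect eta mu (fun p : traj N K => indb (Aev K p)).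
Proof.
apply: pe_le => // p; rewrite /indb.
case hc: (consensus _); last by case: (Aev _ _); lra.
have -> : Aev K p; last lra.
apply/forallP => j; apply/implyP => hj.
have -> : j = ord_max; last done.
apply: val_inj => /=; apply/eqP; rewrite eqn_leq hj andbT; exact: (ltn_ord j).
Qed.

Lemma A_mono K M : (K <= M)%N ->
  path_expect eta mu (fun p : traj N K => indb (consensus (p ord_max)))
  <= path_expect eta mu (fun p : traj N M => indb (Aev K p)).
Proof.
elim: M => [|M IH] hKM.
  have e : K = 0%N by apply/eqP; rewrite -leqn0.
  subst K; exact: A_base.
case: (eqVneq K M.+1) => [e|ne].
  subst K; exact: A_base.
have hKM' : (K <= M)%N by rewrite -ltnS ltn_neqAle ne.
apply: Rle_trans (IH hKM') _.
rewrite pe_S; apply: pe_le => // q.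
have hF : forall y, 0 <= trans eta (q ord_max) y * indb (Aev K (ext q y)).
  move=> y; apply: Rmult_le_pos; first exact: trans_ge0.
  rewrite /indb; case: (Aev _ _); lra.
case hA: (Aev K q); last first.
  rewrite /indb /=; exact: sum_ge0.
have hc : consensus (q ord_max).
  by have := forallP hA ord_max; rewrite /= hKM'.
have := @term_le_sum _ (fun y => trans eta (q ord_max) y * indb (Aev K (ext q y))) (q ord_max) hF.
rewrite trans_cons //.
have -> : Aev K (ext q (q ord_max)).
  apply/forallP => j; apply/implyP => hj; rewrite ffunE.
  case: ifP => h //.
  by have := forallP hA (inord j); rewrite inordK // hj.
rewrite /indb /= Rmult_1_l; move=> h; exact: h.
Qed.

End Final.
Unset Implicit Arguments.

Theorem proposition2 (N : nat) (eta : R) (mu : state N -> R) :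
  (2 <= N)%N -> 0 < eta -> is_distr mu ->
  (eta <= 1 ->
     forall eps : R, 0 < eps ->
       exists K : nat, forall M : nat, (K <= M)%N ->
         1 - eps <= path_prob eta mu
                      (fun p : traj N M =>
                         [forall j : 'I_M.+1, (K <= j)%N ==> consensus (p j)])) /\
  (1 < eta ->
     forall k : nat,
       expected_sum eta mu k = / eta ^ k * expected_sum eta mu 0 /\
       Rabs (expected_sum eta mu k)
         = exp (- (INR k * ln eta)) * Rabs (expected_sum eta mu 0)).
Proof.
move=> hN he [mu0 mu1]; split.
- move=> he1 eps heps.
  have hd := delta_bnd N.
  have ha : Rabs (1 - delta N) < 1 by rewrite Rabs_pos_eq; lra.
  have [K HK] := pow_lt_1_zero (1 - delta N) ha eps heps.
  exists K => M hKM.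
  have h1 := HK K (le_n K).
  have h2 := Rle_abs ((1 - delta N) ^ K).
  rewrite pp_ind.
  have h3 := @cons_bound N eta mu mu0 mu1 he he1 K.
  have h4 := @A_mono N eta mu mu0 he he1 K M hKM.
  rewrite /Aev in h4; lra.
- move=> he1 k.
  have e := @es_all N eta mu k he1.
  split => //.
  rewrite e Rabs_mult Rabs_pos_eq; last first.
    apply: Rlt_le; apply: Rinv_0_lt_compat; apply: pow_lt; lra.
  congr (_ * _).
  rewrite exp_Ropp; congr (/ _).
  by rewrite -(Rpower_pow k eta he) /Rpower.
Qed.
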